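(* Let Assumptions (A1), (A2) and (A4) hold for Algorithm Min-max DS. For $\epsilon\in(0,1)$, let $k_\epsilon$ be the first iteration index such that $\mu_{k_\epsilon+1}\le\epsilon$. Then $$k_\epsilon\ \le\ \frac{2}{c\alpha_0^2}\big(f(x_0)-F^{\min}\big)+\frac{\Omega\,(L_{\max}+c)^2(\mathcal{C}_1+1)^2}{4\beta_1^2}\,\epsilon^{-2},$$ where $\Omega=\frac{\gamma^2}{1-\beta_2^2}\left(\gamma^{-2}\alpha_0^2+\frac2c(f(x_0)-F^{\min})\right)$.
   Context: $F=(f_1,\dots,f_m)$, $m\ge2$, $I=\{1,\dots,m\}$, $f(x):=\max_{i\in I}f_i(x)$. Algorithm Min-max DS: choose $x_0$ with $f_i(x_0)<\infty$, $\alpha_0>0$, $0<\beta_1\le\beta_2<1$, $\gamma\ge1$, a set $\mathcal{D}$ of positive spanning sets of unit vectors, and $c>0$. At iteration $k$: choose $D_k\in\mathcal{D}$; if some $d_k\in D_k$ satisfies $f(x_k+\alpha_kd_k)<f(x_k)-\frac c2\alpha_k^2$, the iteration is successful, $x_{k+1}=x_k+\alpha_kd_k$, $\alpha_{k+1}\in[\alpha_k,\gamma\alpha_k]$; otherwise unsuccessful, $x_{k+1}=x_k$, $\alpha_{k+1}\in[\beta_1\alpha_k,\beta_2\alpha_k]$. $\mu(x):=-\min_{\|d\|\le1}\max_{i\in I}\nabla f_i(x)^\top d$, $\mu_k:=\mu(x_k)$, $\mu_{D_k}:=-\min_{d\in D_k,\|d\|\le1}\max_{i\in I}\nabla f_i(x_k)^\top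 d$. Pareto dominance: $y\prec z$ iff $z-y\in\mathbb{R}^m_+\setminus\{0\}$. (A1): each $f_i$ is continuously differentiable with $L_i$-Lipschitz gradient; $L_{\max}=\max_iL_i$. (A2): each $f_i$ is bounded below by $f_i^{\min}$ and above by $f_i^{\max}$ on $\{x: F(x)$ is not dominated by $F(x_0)\}$; $F^{\min}=\min_if_i^{\min}$. (A4): there exists $\mathcal{C}_1>0$ with $|\mu_{D_k}-\mu_k|\le\mathcal{C}_1\mu_{D_k}$ for all $k\ge0$. *)

(* Defs.v *)
From Stdlib Require Import Reals ClassicalEpsilon.
From mathcomp Require Import ssreflect ssrfun ssrbool eqtype ssrnat seq fintype bigop.
Set Implicit Arguments.
Unset Strict Implicit.
Open Scope R_scope.

Definition vec (n : nat) := 'I_n -> R.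
Definition vadd n (x y : vec n) : vec n := fun j => x j + y j.
Definition vscale n (a : R) (x : vec n) : vec n := fun j => a * x j.
Definition vsub n (x y : vec n) : vec n := fun j => x j - y j.
Definition dot n (x y : vec n) : R := \big[Rplus/0]_(j < n) (x j * y j).
Definition vnorm n (x : vec n) : R := sqrt (dot x x).

Definition sup_R (E : R -> Prop) : R := epsilon (inhabits 0) (fun l => is_lub E l).
Definition inf_R (E : R -> Prop) : R := - sup_R (fun y => E (- y)).

Definition has_gradient n (f : vec n -> R) (g : vec n -> vec n) : Prop :=
  forall x eps, 0 < eps -> exists delta, 0 < delta /\
    forall h, vnorm h < delta ->
      Rabs (f (vadd x h) - f x - dot (g x) h) <= eps * vnorm h.

Definition lipschitz n (g : vec n -> vec n) (L : R) : Prop :=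
  forall x y, vnorm (vsub (g x) (g y)) <= L * vnorm (vsub x y).

(* max over the index set I = {0,...,m-1} (m >= 1) *)
Definition maxI (m : nat) (a : nat -> R) : R := \big[Rmax/a 0%N]_(i < m) a i.
Definition minI (m : nat) (a : nat -> R) : R := \big[Rmin/a 0%N]_(i < m) a i.

Definition fmax_obj n m (fs : nat -> vec n -> R) (x : vec n) : R := maxI m (fun i => fs i x).

Definition pareto_lt (m : nat) (y z : nat -> R) : Prop :=
  (forall i, (i < m)%N -> y i <= z i) /\ (exists i, (i < m)%N /\ y i <> z i).

Definition positive_spanning n (D : list (vec n)) : Prop :=
  forall v : vec n, exists lam : nat -> R, (forall j, 0 <= lam j) /\
    forall k : 'I_n, v k = \big[Rplus/0]_(j < size D) (lam j * (nth (fun _ => 0) D j) k).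

Definition unit_vectors n (D : list (vec n)) : Prop :=
  forall d, List.In d D -> vnorm d = 1.

Definition mu n m (grad : nat -> vec n -> vec n) (x : vec n) : R :=
  - inf_R (fun v => exists d : vec n, vnorm d <= 1 /\ v = maxI m (fun i => dot (grad i x) d)).

Definition mu_D n m (grad : nat -> vec n -> vec n) (D : list (vec n)) (x : vec n) : R :=
  - inf_R (fun v => exists d : vec n, List.In d D /\ vnorm d <= 1 /\
                    v = maxI m (fun i => dot (grad i x) d)).

Definition minmax_DS_run n m (fs : nat -> vec n -> R) (Dset : list (vec n) -> Prop)
  (c beta1 beta2 gamma : R) (x : nat -> vec n) (alpha : nat -> R) (D : nat -> list (vec n)) : Prop :=
  0 < alpha 0%N /\
  forall k : nat, Dset (D k) /\
   ((exists d, List.In d (D k) /\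
       fmax_obj m fs (vadd (x k) (vscale (alpha k) d)) < fmax_obj m fs (x k) - c / 2 * alpha k ^ 2 /\
       x k.+1 = vadd (x k) (vscale (alpha k) d) /\
       alpha k <= alpha k.+1 <= gamma * alpha k)
    \/
    ((forall d, List.In d (D k) ->
        ~ (fmax_obj m fs (vadd (x k) (vscale (alpha k) d)) < fmax_obj m fs (x k) - c / 2 * alpha k ^ 2)) /\
       x k.+1 = x k /\
       beta1 * alpha k <= alpha k.+1 <= beta2 * alpha k)).

(* Main.v *)
Require Import Defs.
From Stdlib Require Import Reals Lra Psatz ClassicalEpsilon Classical FunctionalExtensionality.
From Coquelicot Require Import Coquelicot.
From mathcomp Require Import ssreflect ssrfun ssrbool eqtype ssrnat seq fintype bigop.
Open Scope R_scope.

Lemma sumD (I : Type) (r : seq I) (F G : I -> R) :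
  \big[Rplus/0]_(j <- r) (F j + G j) = \big[Rplus/0]_(j <- r) F j + \big[Rplus/0]_(j <- r) G j.
Proof. elim: r => [|a r IH]; rewrite ?big_nil ?big_cons /=; [lra| rewrite IH; lra]. Qed.

Lemma sumZ (I : Type) (r : seq I) (F : I -> R) a :
  \big[Rplus/0]_(j <- r) (a * F j) = a * \big[Rplus/0]_(j <- r) F j.
Proof. elim: r => [|b r IH]; rewrite ?big_nil ?big_cons /=; [lra| rewrite IH; lra]. Qed.

Lemma sum_ge0 (I : Type) (r : seq I) (F : I -> R) :
  (forall j, 0 <= F j) -> 0 <= \big[Rplus/0]_(j <- r) F j.
Proof. move=> H; apply: (big_ind (fun v => 0 <= v)) => //; [lra| move=> u v; lra]. Qed.

Lemma dot_ge0 n (u : vec n) : 0 <= dot u u.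
Proof. apply: sum_ge0 => j; nra. Qed.

Lemma unit_dot n (d : vec n) : vnorm d = 1 -> dot d d = 1.
Proof. rewrite /vnorm => H. rewrite -(sqrt_sqrt (dot d d)); [rewrite H; lra| apply dot_ge0]. Qed.

Lemma CS_seq (I : Type) (r : seq I) (u d : I -> R) :
  \big[Rplus/0]_(j <- r) (d j * d j) = 1 ->
  \big[Rplus/0]_(j <- r) (u j * d j) <= sqrt (\big[Rplus/0]_(j <- r) (u j * u j)).
Proof.
move=> Hd. set l := \big[Rplus/0]_(j <- r) (u j * d j).
have HH : 0 <= \big[Rplus/0]_(j <- r) ((u j - l * d j) * (u j - l * d j)) by apply: sum_ge0 => j; apply: Rle_0_sqr.
have E : forall j, (u j - l * d j) * (u j - l * d j) = u j * u j + ((-2*l) * (u j * d j) + (l*l) * (d j * d j)) by move=> j; ring.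
rewrite (eq_bigr _ (fun j _ => E j)) !sumD !sumZ Hd -/l in HH.
apply: Rle_trans (Rle_abs _) _.
rewrite -sqrt_Rsqr_abs. apply: sqrt_le_1_alt. rewrite /Rsqr. nra.
Qed.

Lemma CS n (u d : vec n) : dot d d = 1 -> dot u d <= vnorm u.
Proof. exact: CS_seq. Qed.

Lemma sum_ext_Z (I : Type) (r : seq I) (F G : I -> R) a :
  (forall j, F j = a * G j) -> \big[Rplus/0]_(j <- r) F j = a * \big[Rplus/0]_(j <- r) G j.
Proof. move=> H. rewrite -sumZ. apply: eq_bigr => j _; exact: H. Qed.

Lemma sum_ext_D (I : Type) (r : seq I) (F G H : I -> R) :
  (forall j, F j = G j - H j) -> \big[Rplus/0]_(j <- r) F j = \big[Rplus/0]_(j <- r) G j - \big[Rplus/0]_(j <- r) H j.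
Proof.
move=> E. have E' : forall j, F j = G j + (-1) * H j by move=> j; rewrite E; ring.
rewrite (eq_bigr _ (fun j _ => E' j)) sumD sumZ. ring.
Qed.

Lemma dot_scale_r n (u d : vec n) t : dot u (vscale t d) = t * dot u d.
Proof. apply: sum_ext_Z => j. rewrite /vscale; ring. Qed.

Lemma dot_sub_l n (u v d : vec n) : dot (vsub u v) d = dot u d - dot v d.
Proof. apply: sum_ext_D => j. rewrite /vsub; ring. Qed.

Lemma vnorm_scale n (d : vec n) t : dot d d = 1 -> vnorm (vscale t d) = Rabs t.
Proof.
move=> Hd. rewrite /vnorm.
have -> : dot (vscale t d) (vscale t d) = Rsqr t * dot d d.
{ apply: sum_ext_Z => j. rewrite /vscale /Rsqr; ring. }
rewrite Hd Rmult_1_r. apply: sqrt_Rsqr_abs.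
Qed.

Lemma big_max_ub (I : eqType) (r : seq I) (F : I -> R) z i : i \in r -> F i <= \big[Rmax/z]_(j <- r) F j.
Proof.
elim: r => [|a r IH] //. rewrite in_cons big_cons /=. case/orP.
- move/eqP => ->. apply: Rmax_l.
- move=> H; apply: Rle_trans (IH H) _; apply: Rmax_r.
Qed.

Lemma maxI_ub m (a : nat -> R) i : (i < m)%N -> a i <= maxI m a.
Proof. move=> Hi. rewrite /maxI. exact: (@big_max_ub _ _ (fun j : 'I_m => a j) _ _ (mem_index_enum (Ordinal Hi))). Qed.

Lemma maxI_lub m (a : nat -> R) B : (forall i, (i < m)%N -> a i <= B) -> (0 < m)%N -> maxI m a <= B.
Proof.
move=> H Hm. rewrite /maxI. apply: (big_ind (fun v => v <= B)); first exact: H.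
- move=> u v; apply: Rmax_lub.
- move=> i _; apply: H; exact: ltn_ord.
Qed.

Lemma big_min_lb (I : eqType) (r : seq I) (F : I -> R) z i : i \in r -> \big[Rmin/z]_(j <- r) F j <= F i.
Proof.
elim: r => [|a r IH] //. rewrite in_cons big_cons /=. case/orP.
- move/eqP => ->. apply: Rmin_l.
- move=> H; apply: Rle_trans _ (IH H); apply: Rmin_r.
Qed.

Lemma minI_le m (a : nat -> R) i : (i < m)%N -> minI m a <= a i.
Proof. move=> Hi. rewrite /minI. exact: (@big_min_lb _ _ (fun j : 'I_m => a j) _ _ (mem_index_enum (Ordinal Hi))). Qed.

Lemma sup_le (S : R -> Prop) B : (exists y, S y) -> (forall y, S y -> y <= B) -> sup_R S <= B.
Proof.
move=> [y Hy] Hb.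
have Hl : exists l, is_lub S l.
{ have [l Hl] := completeness S (ex_intro _ B Hb) (ex_intro _ y Hy). by exists l. }
have [_ H] := epsilon_spec (inhabits 0) (fun l => is_lub S l) Hl.
rewrite /sup_R. apply: H. exact: Hb.
Qed.

Lemma poly_der (D0 Lc t : R) : derivable_pt_lim (fun t => t*D0 + Lc*t^2/2) t (D0 + Lc*t).
Proof. apply is_derive_Reals. auto_derive. all: try done. all: simpl; field. Qed.

Lemma descent n (f : vec n -> R) g Lc x d a :
  has_gradient f g -> lipschitz g Lc -> dot d d = 1 -> 0 < a ->
  f (vadd x (vscale a d)) <= f x + a * dot (g x) d + Lc * a^2 / 2.
Proof.
move=> Hg Hlip Hd Ha.
set phi := fun t => f (vadd x (vscale t d)).
set Dt := fun t => dot (g (vadd x (vscale t d))) d.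
have Hder : forall t, derivable_pt_lim phi t (Dt t).
{ move=> t e He.
  have [del [Hdel H]] := Hg (vadd x (vscale t d)) (e/2) ltac:(lra).
  exists (mkposreal del Hdel) => h Hh0 Hh /=.
  have Hv : vnorm (vscale h d) = Rabs h by apply: vnorm_scale.
  have := H (vscale h d) ltac:(rewrite Hv; exact Hh).
  have E : vadd (vadd x (vscale t d)) (vscale h d) = vadd x (vscale (t+h) d).
  { apply: functional_extensionality => j. rewrite /vadd /vscale; ring. }
  rewrite E dot_scale_r Hv /phi /Dt.
  set A := f (vadd x (vscale (t + h) d)). set B := f (vadd x (vscale t d)).
  set Dv := dot (g (vadd x (vscale t d))) d.
  move=> HN.
  have -> : (A - B) / h - Dv = (A - B - h * Dv) * / h by field.
  rewrite Rabs_mult Rabs_inv.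
  have Hah : 0 < Rabs h by apply: Rabs_pos_lt.
  have Hi : / Rabs h * Rabs h = 1 by field; lra.
  have Hip : 0 < / Rabs h by apply: Rinv_0_lt_compat.
  set N := Rabs (A - B - h * Dv) in HN *. set ah := Rabs h in Hah Hi Hip HN *.
  nra. }
set D0 := dot (g x) d.
set psi := fun t => (phi t - phi 0) - (t*D0 + Lc*t^2/2).
have Hpsi : forall t, derivable_pt_lim psi t ((Dt t - 0) - (D0 + Lc*t)).
{ move=> t. apply: (derivable_pt_lim_minus (fun t => phi t - phi 0) (fun t => t*D0 + Lc*t^2/2)).
  - apply: (derivable_pt_lim_minus phi (fct_cte (phi 0))); [exact: Hder| exact: derivable_pt_lim_const].
  - exact: poly_der. }
have [t [Ht Hrange]] := MVT_cor2 psi (fun t => (Dt t - 0) - (D0 + Lc*t)) 0 a Ha (fun t _ => Hpsi t).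
have Hle : Dt t - D0 <= Lc * t.
{ rewrite /Dt /D0 -dot_sub_l.
  apply: Rle_trans (CS _ _ _ Hd) _.
  apply: Rle_trans (Hlip _ _) _.
  have -> : vsub (vadd x (vscale t d)) x = vscale t d.
  { apply: functional_extensionality => j. rewrite /vadd /vscale /vsub; ring. }
  rewrite vnorm_scale // Rabs_pos_eq; lra. }
have H0 : psi 0 = 0.
{ rewrite /psi; cbv beta; field. }
have : psi a <= 0 by nra.
have Ex : vadd x (vscale 0 d) = x.
{ apply: functional_extensionality => j. rewrite /vadd /vscale; ring. }
rewrite /psi /phi Ex. lra.
Qed.

Lemma dot0 (u v : vec 0) : dot u v = 0.
Proof. by rewrite /dot big_ord0. Qed.

Lemma mu_n0 m (grad : nat -> vec 0 -> vec 0) (y : vec 0) : mu m grad y <= 0.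
Proof.
rewrite /mu /inf_R Ropp_involutive. apply: sup_le.
- exists 0. exists (fun _ => 0). split.
  + rewrite /vnorm dot0 sqrt_0; lra.
  + rewrite Ropp_0 /maxI. symmetry. apply: (big_ind (fun v => v = 0)).
    * exact: dot0.
    * move=> a b -> ->. rewrite Rmax_left; lra.
    * move=> i _; exact: dot0.
- move=> y' [d [_ Hd]].
  have : maxI m (fun i => dot (grad i y) d) = 0.
  { rewrite /maxI. apply: (big_ind (fun v => v = 0)).
    * exact: dot0.
    * move=> a b -> ->. rewrite Rmax_left; lra.
    * move=> i _; exact: dot0. }
  lra.
Qed.

Lemma muD_bound n m (Hm0 : (0 < m)%N) (fs : nat -> vec n -> R) grad (L : nat -> R) Lmax c
  (Ds : list (vec n)) (y : vec n) a :
  (0 < n)%N -> positive_spanning Ds -> unit_vectors Ds ->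
  (forall i, (i < m)%N -> has_gradient (fs i) (grad i) /\ lipschitz (grad i) (L i)) ->
  (forall i, (i < m)%N -> L i <= Lmax) -> 0 < a ->
  (forall d, List.In d Ds -> ~ (fmax_obj m fs (vadd y (vscale a d)) < fmax_obj m fs y - c/2*a^2)) ->
  mu_D m grad Ds y <= (Lmax + c) * a / 2.
Proof.
move=> Hn Hps Huv HA1 HL Ha Hun.
rewrite /mu_D /inf_R Ropp_involutive. apply: sup_le.
- have [lam [_ Hlam]] := Hps (fun _ => 1).
  have := Hlam (Ordinal Hn).
  case: Ds Hps Huv Hun Hlam => [|d0 Ds'] Hps Huv Hun Hlam.
  + rewrite big_ord0 => H; lra.
  + move=> _. exists (- maxI m (fun i => dot (grad i y) d0)). exists d0.
    split; first by left. split; first by rewrite (Huv d0 (or_introl erefl)); lra.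
    by rewrite Ropp_involutive.
- move=> y' [d [Hin [_ Hy']]].
  have Hd := unit_dot _ _ (Huv d Hin).
  set M := maxI m (fun i => dot (grad i y) d) in Hy'.
  have Hdesc : fmax_obj m fs (vadd y (vscale a d)) <= fmax_obj m fs y + a * M + Lmax * a^2 / 2.
  { rewrite {1}/fmax_obj. apply: maxI_lub => // i Hi.
    have [Hg Hl] := HA1 i Hi.
    have H1 := descent _ _ _ _ y d a Hg Hl Hd Ha.
    have H2 : fs i y <= fmax_obj m fs y by apply: (maxI_ub m (fun i => fs i y)).
    have H3 : dot (grad i y) d <= M by apply: (maxI_ub m (fun i => dot (grad i y) d)).
    have H4 := HL i Hi.
    have H5 : 0 <= a^2 by nra.
    nra. }
  have := Hun d Hin. move/Rnot_lt_le => H6.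
  have : - c / 2 * a ^ 2 <= a * M + Lmax * a ^ 2 / 2 by lra.
  move=> H7.
  have : -M <= (Lmax + c) * a / 2.
  { apply: (Rmult_le_reg_l a) => //. nra. }
  lra.
Qed.

Fixpoint ssum (g : nat -> R) (N : nat) : R :=
  match N with O => 0 | S N' => ssum g N' + g N' end.

Lemma ssum_ge0 g N : (forall j, 0 <= g j) -> 0 <= ssum g N.
Proof. move=> H; elim: N => [|N IH] /=; [lra| have := H N; lra]. Qed.

Lemma ssum_scale g N k : ssum (fun j => k * g j) N = k * ssum g N.
Proof. elim: N => [|N IH] /=; [ring| rewrite IH; ring]. Qed.

Lemma ssum_lower g u b : (forall j, 0 <= g j) -> forall K,
  (forall j, (u <= j)%N -> (j < K)%N -> b <= g j) -> INR (K - u)%N * b <= ssum g K.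
Proof.
move=> H0. elim => [|K IH] Hb.
- rewrite (_ : (0 - u)%N = 0%N); last by apply/eqP; rewrite subn_eq0. rewrite /=. lra.
- case: (leqP u K) => HuK.
  + have -> : (K.+1 - u)%N = (K - u)%N.+1 by rewrite subSn.
    rewrite S_INR /=.
    have := IH (fun j h1 h2 => Hb j h1 (ltn_trans h2 (ltnSn K))).
    have := Hb K HuK (ltnSn K). lra.
  + have -> : (K.+1 - u)%N = 0%N by apply/eqP; rewrite subn_eq0.
    rewrite /=. have := ssum_ge0 g K H0. have := H0 K. lra.
Qed.

Definition succ_it n m (fs : nat -> vec n -> R) c gamma (x : nat -> vec n) (alpha : nat -> R) k :=
  fmax_obj m fs (x k.+1) < fmax_obj m fs (x k) - c/2*alpha k^2 /\ alpha k <= alpha k.+1 <= gamma*alpha k.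
Definition unsucc_it n m (fs : nat -> vec n -> R) (D : nat -> list (vec n)) c beta1 beta2
  (x : nat -> vec n) (alpha : nat -> R) k :=
  (forall d, List.In d (D k) -> ~ (fmax_obj m fs (vadd (x k) (vscale (alpha k) d)) < fmax_obj m fs (x k) - c/2*alpha k^2))
  /\ x k.+1 = x k /\ beta1*alpha k <= alpha k.+1 <= beta2*alpha k.

Theorem theorem3
  (n m : nat) (Hm : (2 <= m)%N)
  (fs : nat -> vec n -> R) (grad : nat -> vec n -> vec n) (L : nat -> R)
  (fmin fmax : nat -> R) (C1 : R)
  (Dset : list (vec n) -> Prop)
  (c beta1 beta2 gamma : R)
  (x : nat -> vec n) (alpha : nat -> R) (D : nat -> list (vec n))
  (* algorithm parameters *)
  (Hbeta : 0 < beta1 <= beta2 /\ beta2 < 1) (Hgamma : 1 <= gamma) (Hc : 0 < c)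
  (HDset : forall Ds, Dset Ds -> positive_spanning Ds /\ unit_vectors Ds)
  (Hrun : minmax_DS_run m fs Dset c beta1 beta2 gamma x alpha D)
  (* (A1) *)
  (HA1 : forall i, (i < m)%N -> has_gradient (fs i) (grad i) /\ lipschitz (grad i) (L i))
  (* (A2) *)
  (HA2 : forall i, (i < m)%N -> forall y : vec n,
           ~ pareto_lt m (fun j => fs j (x 0%N)) (fun j => fs j y) ->
           fmin i <= fs i y <= fmax i)
  (* (A4) *)
  (HC1 : 0 < C1)
  (HA4 : forall k, Rabs (mu_D m grad (D k) (x k) - mu m grad (x k)) <= C1 * mu_D m grad (D k) (x k))
  (eps : R) (Heps : 0 < eps < 1) (keps : nat)
  (Hkeps : mu m grad (x keps.+1) <= eps /\
           forall j, (j < keps)%N -> eps < mu m grad (x j.+1)) :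
  let Fmin := minI m fmin in
  let Lmax := maxI m L in
  let f0 := fmax_obj m fs (x 0%N) in
  let Omega := gamma ^ 2 / (1 - beta2 ^ 2) *
               (/ gamma ^ 2 * alpha 0%N ^ 2 + 2 / c * (f0 - Fmin)) in
  INR keps <= 2 / (c * alpha 0%N ^ 2) * (f0 - Fmin)
              + Omega * (Lmax + c) ^ 2 * (C1 + 1) ^ 2 / (4 * beta1 ^ 2) * / eps ^ 2.
Proof.
intros Fmin Lmax f0 Omega.
have Hm0 : (0 < m)%N by apply: leq_trans Hm.
case: Hbeta => [[Hb1 Hb12] Hb2].
case: Hrun => [Ha0 Hrun].
set F := fun k => fmax_obj m fs (x k).
have HF0 : F 0%N = f0 by [].
have HOm : Omega * (1 - beta2^2) = alpha 0%N ^ 2 + gamma^2 * (2/c) * (f0 - Fmin).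
{ rewrite /Omega. field. split; nra. }
have HL : forall i, (i < m)%N -> L i <= Lmax by move=> i Hi; apply: (maxI_ub m L).
clearbody Omega Lmax.
set S := succ_it _ m fs c gamma x alpha.
set U := unsucc_it _ m fs D c beta1 beta2 x alpha.
have Hcase : forall k, S k \/ U k.
{ move=> k. have [_ [[d [_ [H1 [H2 H3]]]] | H]] := Hrun k.
  - left. rewrite /S /succ_it H2. split; [exact H1| exact H3].
  - right; exact H. }
have Hpos : forall k, 0 < alpha k.
{ elim => [|k IH] //. case: (Hcase k) => [[_ H]|[_ [_ H]]]; nra. }
have Hx : forall k, x k = x 0%N \/ F k < f0.
{ elim => [|k IH]; first by left.
  case: (Hcase k) => [[H1 _]|[_ [H2 _]]].
  - right. have := Hpos k => Hp.
    have Hk : F k <= f0.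
    { case: IH => [E|E]; last lra.
      have -> : F k = F 0%N by rewrite /F E.
      rewrite HF0; lra. }
    rewrite /F in H1 Hk *. nra.
  - have -> : F k.+1 = F k by rewrite /F H2.
    by rewrite H2. }
have HF : forall k, Fmin <= F k.
{ move=> k.
  have Hnp : ~ pareto_lt m (fun j => fs j (x 0%N)) (fun j => fs j (x k)).
  { move=> [Hle [i [Hi Hne]]]. case: (Hx k) => [E|E].
    - apply: Hne. by rewrite E.
    - have : f0 <= F k.
      { rewrite /f0 /F /fmax_obj. apply: maxI_lub => // j Hj.
        apply: Rle_trans (Hle j Hj) _. exact: (maxI_ub m (fun i => fs i (x k))). }
      lra. }
  have [H1 _] := HA2 0%N Hm0 (x k) Hnp.
  have H2 : fs 0%N (x k) <= F k by apply: (maxI_ub m (fun i => fs i (x k))).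
  have H3 : Fmin <= fmin 0%N by apply: minI_le.
  lra. }
have Hf0 : Fmin <= f0 by rewrite -HF0.
clearbody f0 Fmin.
set g := fun j => alpha j ^ 2.
have Hg0 : forall j, 0 <= g j by move=> j; rewrite /g; have := Hpos j; nra.
have Hq : 0 < 2 / c by apply: Rdiv_lt_0_compat; lra.
have Hqc : 2 / c * c = 2 by field; lra.
have HQ : forall N, 0 <= alpha 0%N ^ 2 + beta2^2 * ssum g N + gamma^2 * (2/c) * (f0 - F N) - ssum g N.+1.
{ elim => [|N IH].
  - rewrite /= HF0 /g. lra.
  - have Hp := Hpos N.
    have Hd : beta2^2 * g N + gamma^2 * (2/c) * (F N - F N.+1) - g N.+1 >= 0.
    { case: (Hcase N) => [[H1 H2]|[_ [H2 H3]]].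
      + have h1 : F N - F N.+1 >= c/2 * alpha N ^2 by rewrite /F; lra.
        have h2 : 2/c * (F N - F N.+1) >= alpha N ^2.
        { have : 2/c * (F N - F N.+1) >= 2/c * (c/2 * alpha N^2) by apply: Rmult_ge_compat_l; lra.
          have -> : 2/c * (c/2 * alpha N^2) = alpha N ^2 by field; lra. done. }
        have h3 : g N.+1 <= gamma^2 * g N by rewrite /g; nra.
        have h4 : gamma^2 * (2/c * (F N - F N.+1)) >= gamma^2 * alpha N^2 by apply: Rmult_ge_compat_l; nra.
        have h5 : 0 <= beta2^2 * g N by have := Hg0 N; nra.
        rewrite /g in h3 h5 *. nra.
      + have E : F N.+1 = F N by rewrite /F H2.
        have h0 : 0 <= alpha N.+1 by nra.
        have h1 : alpha N.+1 <= beta2 * alpha N by lra.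
        have h2 : alpha N.+1 ^2 <= beta2^2 * alpha N^2 by nra.
        rewrite E /g. lra. }
    move: IH Hd. rewrite /=. lra. }
have HOmb : forall N, ssum g N.+1 <= Omega.
{ move=> N. have H1 := HQ N. have H2 := HF N.
  have H3 : ssum g N <= ssum g N.+1 by rewrite /=; have := Hg0 N; lra.
  have H4 : 0 <= ssum g N by apply: ssum_ge0.
  have H5 : (1 - beta2^2) * ssum g N.+1 <= alpha 0%N ^ 2 + gamma^2 * (2/c) * (f0 - Fmin).
  { have : gamma^2 * (2/c) * (f0 - F N) <= gamma^2 * (2/c) * (f0 - Fmin).
    { apply: Rmult_le_compat_l; [nra| lra]. }
    nra. }
  rewrite -HOm in H5. apply: (Rmult_le_reg_r (1 - beta2^2)); first nra. lra. }
have HE : forall j, (forall k, (k < j)%N -> S k) -> alpha 0%N <= alpha j /\ INR j * (c * alpha 0%N ^2 / 2) <= f0 - F j.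
{ elim => [|j IH] Hs.
  - rewrite /= HF0. lra.
  - have [IH1 IH2] := IH (fun k Hk => Hs k (ltn_trans Hk (ltnSn j))).
    have [H1 H2] := Hs j (ltnSn j).
    split; first lra.
    rewrite S_INR.
    have Ha2 : alpha 0%N ^2 <= alpha j ^2 by have := Hpos 0%N; nra.
    have Hc2 : c * alpha 0%N ^ 2 / 2 <= c / 2 * alpha j ^2 by nra.
    rewrite /F in H1 IH2 *. lra. }
set A := 2 / (c * alpha 0%N ^ 2) * (f0 - Fmin).
have HEA : forall j, (forall k, (k < j)%N -> S k) -> INR j <= A.
{ move=> j Hs. have [_ H] := HE j Hs. have := HF j => Hj.
  have Hp : 0 < c * alpha 0%N ^2 / 2 by have := Hpos 0%N; nra.
  have -> : A = (f0 - Fmin) / (c * alpha 0%N ^2 / 2) by rewrite /A; field; have := Hpos 0%N; nra.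
  set p := c * alpha 0%N ^2 / 2 in H Hp *.
  apply: (Rmult_le_reg_r p) => //.
  have -> : (f0 - Fmin) / p * p = f0 - Fmin by field; lra.
  lra. }
have HS : forall K, (forall k, (k < K)%N -> S k) \/ exists u, (u < K)%N /\ U u /\ forall k, (k < u)%N -> S k.
{ elim => [|K IH]; first by left.
  case: IH => [IH|[u [Hu [HU Hs]]]].
  - case: (classic (S K)) => HSK.
    + left => k Hk. case: (ltngtP k K) => Hc'.
      * exact: IH.
      * exfalso. move: Hk Hc'. rewrite ltnS => Hk Hc'. by rewrite leqNgt Hc' in Hk.
      * by rewrite Hc'.
    + right. exists K. split => //. split => //. by case: (Hcase K).
  - right. exists u. split; [exact: ltn_trans Hu (ltnSn K)| by split]. }
set kap := (C1 + 1) * (Lmax + c) / 2.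
have KEY : forall j, (j < keps)%N -> U j -> eps < kap * alpha j.
{ move=> j Hj [Hun [Hxj Hal]].
  have Hmu := proj2 Hkeps j Hj. rewrite Hxj in Hmu.
  case: (posnP n) => Hn.
  - exfalso. subst n. have := mu_n0 m grad (x j). lra.
  - have [Hps Huv] := HDset (D j) (proj1 (Hrun j)).
    have HmD := muD_bound n m Hm0 fs grad L Lmax c (D j) (x j) (alpha j) Hn Hps Huv HA1 HL (Hpos j) Hun.
    have H4 := HA4 j.
    have H5 : mu m grad (x j) - mu_D m grad (D j) (x j) <= C1 * mu_D m grad (D j) (x j).
    { apply: Rle_trans _ H4. rewrite Rabs_minus_sym. apply: Rle_abs. }
    have H6 : (C1 + 1) * mu_D m grad (D j) (x j) <= (C1 + 1) * ((Lmax + c) * alpha j / 2).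
    { apply: Rmult_le_compat_l; lra. }
    rewrite /kap. lra. }
have HOm0 : 0 <= Omega.
{ have : 0 <= alpha 0%N ^ 2 + gamma^2 * (2/c) * (f0 - Fmin).
  { have := Hpos 0%N. have : 0 <= gamma^2 * (2/c) by nra. nra. }
  rewrite -HOm => H. have Hb2p : 0 < 1 - beta2^2 by nra.
  case: (Rle_or_lt 0 Omega) => // HO. nra. }
have HT2 : 0 <= Omega * (Lmax + c) ^ 2 * (C1 + 1) ^ 2 / (4 * beta1 ^ 2) * / eps ^ 2.
{ have h1 : 0 <= Omega * (Lmax + c) ^ 2 * (C1 + 1) ^ 2 by apply: Rmult_le_pos; [apply: Rmult_le_pos; [exact: HOm0| apply: pow2_ge_0]| apply: pow2_ge_0].
  have h2 : 0 < / (4 * beta1 ^ 2) by apply: Rinv_0_lt_compat; nra.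
  have h3 : 0 < / eps ^ 2 by apply: Rinv_0_lt_compat; nra.
  rewrite /Rdiv. apply: Rmult_le_pos; [apply: Rmult_le_pos; lra | lra]. }
case: (HS keps) => [Hall|[u [Hu [HU Hs]]]].
{ have := HEA keps Hall. rewrite /A. lra. }
have Hua := HEA u Hs.
have Hku := KEY u Hu HU.
have Hkap : 0 < kap.
{ have := Hpos u. case: (Rlt_or_le 0 kap) => // Hk Hp. nra. }
have Hlow : forall d, (u + d <= keps)%N -> beta1 * eps <= kap * alpha (u + d)%N.
{ elim => [|d IH] Hd.
  - rewrite addn0. nra.
  - rewrite addnS. have Hlt : (u + d < keps)%N by rewrite -addnS.
    have IH' := IH (ltnW Hlt).
    case: (Hcase (u + d)%N) => [[_ H]|HU'].
    + nra.
    + have := KEY _ Hlt HU'. case: HU' => [_ [_ H]]. nra. }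
have Hsq : forall j, (u <= j)%N -> (j < keps)%N -> (beta1 * eps)^2 <= kap^2 * g j.
{ move=> j H1 H2.
  have := Hlow (j - u)%N. rewrite subnKC // => H. have := H (ltnW H2).
  rewrite /g => H'. have : 0 < beta1 * eps by nra. nra. }
have Hcount := ssum_lower (fun j => kap^2 * g j) u ((beta1 * eps)^2)
   (fun j => ltac:(have := Hg0 j; nra)) keps Hsq.
rewrite ssum_scale in Hcount.
have Hsk : ssum g keps <= Omega.
{ apply: Rle_trans (HOmb keps). rewrite /=. have := Hg0 keps. lra. }
have HKu : INR keps = INR u + INR (keps - u)%N.
{ have E : (u + (keps - u))%N = keps by rewrite addnC subnK //; exact: ltnW.
  rewrite -{1}E. exact: plus_INR. }
have HT2e : Omega * (Lmax + c) ^ 2 * (C1 + 1) ^ 2 / (4 * beta1 ^ 2) * / eps ^ 2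
          = kap^2 * Omega / (beta1 * eps)^2.
{ rewrite /kap. field. split; lra. }
have Hb : 0 < (beta1 * eps)^2 by apply: pow_lt; apply: Rmult_lt_0_compat; lra.
have Hcnt : INR (keps - u)%N <= kap^2 * Omega / (beta1 * eps)^2.
{ apply: (Rmult_le_reg_r ((beta1 * eps)^2)) => //.
  rewrite /Rdiv Rmult_assoc Rinv_l; last lra.
  have : kap^2 * ssum g keps <= kap^2 * Omega by apply: Rmult_le_compat_l; nra.
  lra. }
rewrite HKu HT2e. lra.
Qed.
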